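(* Let $d\in\mathbb{N}^*$ and $M\in\mathbb{N}^*$. There exists a feed-forward neural network architecture $\mathcal{A}$ with $d$ input neurons, two hidden layers, $2(d+1)^2M$ weights and the Heaviside activation function, such that for any $(\alpha_i)_{1\le i\le M}\in\mathbb{R}^M$ and any collection $(\mathcal{C}_i)_{1\le i\le M}$ of mutually disjoint hypercubes of $\mathbb{R}^d$, the function $\tilde f:\mathbb{R}^d\to\mathbb{R}$ defined by $\tilde f(x)=\sum_{i=1}^M\alpha_i\mathds{1}_{\mathcal{C}_i}(x)$ belongs to $H_{\mathcal{A}}$.
   Context: A hypercube here is a cube in $\mathbb{R}^d$ with nonempty interior, bounded by $2d$ faces supported by hyperplanes, where each face may or may not belong to the cube (i.e. it is an intersection of $2d$ half-spaces $\{\langle \mathbf w_j,x\rangle+b_j\ge0\}$ or $\{\langle \mathbf w_j,x\rangle+b_j>0\}$ forming a cube). Heaviside activation: $\sigma(x)=\mathds{1}_{x\ge0}$. A feed-forward architecture is a directed acyclic graph with $d$ input nodes (in-degree $0$), a single output node (out-degree $0$); layer $0$ is the inputs, layer $\ell$ consists of nodes having a predecessor in layer $\ell-1$ and other predecessors only in earlier layers; intermediate layers are hidden layers. A real weight is attached to every edge and every non-input node; the number of weights is their total number. For weights $\mathbf w$, input neuron $v$ outputs $x_v$, each hidden neuron outputs $\sigma(\sum_{u\in P_v}w_{u\to v}y_u+w_v)$ ($P_v$ = predecessors), the output neuron outputs $\sum_{u\in P_v}w_{u\to v}y_u+w_v$; $H_{\mathcal{A}}$ is the set of all functions $\mathbb{R}^d\to\mathbb{R}$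 so computed over all weight vectors. *)

(* Defs.v *)
From HB Require Import structures.
From mathcomp Require Import all_boot all_order all_algebra.
From mathcomp Require Import boolp classical_sets reals numfun.
Set Implicit Arguments. Unset Strict Implicit. Unset Printing Implicit Defensive.
Import Order.TTheory GRing.Theory Num.Theory.
Local Open Scope ring_scope.
Local Open Scope classical_set_scope.

Definition heaviside {R : realType} (t : R) : R := if 0 <= t then 1 else 0.

Definition dotp {R : realType} {d : nat} (u x : 'I_d -> R) : R :=
  \sum_(k < d) u k * x k.

Definition halfsp {R : realType} (closed : bool) (t : R) : Prop :=
  if closed then 0 <= t else 0 < t.

(* A hypercube of R^d (arbitrary orientation): a cube with side s > 0, corner c,
   orthonormal edge directions u j, i.e. the intersection of the 2d half-spaces
   { <u j, x - c> >= 0 (or > 0) } and { s - <u j, x - c> >= 0 (or > 0) },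
   each face being included or not independently. *)
Definition is_hypercube {R : realType} {d : nat} (C : set ('I_d -> R)) : Prop :=
  exists (u : 'I_d -> 'I_d -> R) (c : 'I_d -> R) (s : R) (lo hi : 'I_d -> bool),
    [/\ 0 < s,
        (forall j l, dotp (u j) (u l) = (j == l)%:R) &
        (forall x, C x <->
           (forall j, halfsp (lo j) (dotp (u j) (fun k => x k - c k)) /\
                      halfsp (hi j) (s - dotp (u j) (fun k => x k - c k))))].

(* Nodes are 'I_n.+1, numbered in a topological
   order (every finite DAG admits such a numbering): nodes v < d are the d
   input nodes (input node v reads coordinate v), the last node ord_max is the
   output node. *)
Definition is_arch (d n : nat) (E : rel 'I_n.+1) : Prop :=
  [/\ (d <= n)%N,
      (forall u v, E u v -> (u < v)%N),
      (forall v : 'I_n.+1, (v < d)%N <-> (forall u, ~~ E u v)) &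
      (forall v : 'I_n.+1, v = ord_max <-> (forall w, ~~ E v w))].

Definition is_layering (d n : nat) (E : rel 'I_n.+1) (lay : 'I_n.+1 -> nat) : Prop :=
  forall v : 'I_n.+1,
    if (v < d)%N then lay v = 0%N
    else [/\ (0 < lay v)%N,
             (exists u, E u v /\ lay u = (lay v).-1) &
             (forall u, E u v -> (lay u < lay v)%N)].

(* Two hidden layers: layers 1 and 2 are the intermediate layers, the output
   node is in layer 3. *)
Definition two_hidden_layers (d n : nat) (E : rel 'I_n.+1) : Prop :=
  exists lay, is_layering d E lay /\ lay ord_max = 3%N.

(* Number of weights: one per edge and one per non-input node. *)
Definition nweights (d n : nat) (E : rel 'I_n.+1) : nat :=
  (#|[set p : 'I_n.+1 * 'I_n.+1 | E p.1 p.2]| + (n.+1 - d))%N.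

Definition in_HA {R : realType} (d n : nat) (E : rel 'I_n.+1)
    (f : ('I_d -> R) -> R) : Prop :=
  exists (w : 'I_n.+1 -> 'I_n.+1 -> R) (b : 'I_n.+1 -> R),
    forall x : 'I_d -> R, exists y : 'I_n.+1 -> R,
      [/\ (forall (v : 'I_n.+1) (hv : (v < d)%N), y v = x (Ordinal hv)),
          (forall v : 'I_n.+1, (d <= v)%N -> v != ord_max ->
              y v = heaviside (\sum_(u | E u v) w u v * y u + b v)),
          y ord_max = \sum_(u | E u ord_max) w u ord_max * y u + b ord_max &
          f x = y ord_max].

(* Main.v *)
Require Import Defs.
From HB Require Import structures.
From mathcomp Require Import all_boot all_order all_algebra.
From mathcomp Require Import boolp classical_sets reals numfun.
From mathcomp Require Import zify ring lra.
Import Order.TTheory GRing.Theory Num.Theory.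
Set Implicit Arguments. Unset Strict Implicit. Unset Printing Implicit Defensive.

Lemma sum_nat_eq0 {T : Type} {idx : T} {op : Monoid.law idx} (a b : nat) (F : nat -> T) :
  (forall u, (a <= u < b)%N -> F u = idx) -> \big[op/idx]_(a <= u < b) F u = idx.
Proof. by move=> H; rewrite big_nat_cond big1 // => u /andP[hu _]; apply: H. Qed.

Lemma count_range a b N : (a <= b)%N -> (b <= N)%N ->
  (\sum_(0 <= u < N) ((a <= u) && (u < b) : nat) = b - a)%N.
Proof.
move=> hab hbN.
rewrite (@big_cat_nat _ _ _ a) //=; last by lia.
rewrite (@big_cat_nat _ _ _ b a N) //=.
rewrite sum_nat_eq0; last by move=> u /andP[_ hu]; rewrite leqNgt hu.
rewrite [X in (_ + (_ + X))%N]sum_nat_eq0; last by move=> u /andP[hu _]; rewrite ltnNge hu andbF.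
rewrite (@eq_big_nat _ _ _ a b _ (fun _ => 1%N)); last by move=> u /andP[h1 h2]; rewrite h1 h2.
by rewrite sum_nat_const_nat muln1 add0n addn0.
Qed.

Lemma orb_nat (a b : bool) : ~~ (a && b) -> ((a || b) : nat) = (a + b)%N.
Proof. by case: a; case: b. Qed.

Lemma card_pairs n (E : rel 'I_n.+1) :
  #|[set p : 'I_n.+1 * 'I_n.+1 | E p.1 p.2]| = (\sum_(v < n.+1) \sum_(u < n.+1) (E u v : nat))%N.
Proof.
rewrite exchange_big pair_big /= cardsE -sum1_card big_mkcond /=.
by apply: eq_bigr => p _; rewrite unfold_in; case: (E _ _).
Qed.
Local Open Scope ring_scope.
Local Open Scope classical_set_scope.

Record CD (R : realType) (d M : nat) := mkCD {
  cU : 'I_M.+1 -> 'I_d.+1 -> 'I_d.+1 -> R;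
  cc : 'I_M.+1 -> 'I_d.+1 -> R;
  cs : 'I_M.+1 -> R;
  clo : 'I_M.+1 -> 'I_d.+1 -> bool;
  chi : 'I_M.+1 -> 'I_d.+1 -> bool;
  calpha : 'I_M.+1 -> R }.

Definition pp (d : nat) := (d + d)%N.
Definition slotj (d k : nat) := if (k < d)%N then k.+1 else (k - d).+1.
Definition slotb (d k : nat) := (d <= k)%N.

Definition sg {R : realType} (b : bool) : R := if b then 1 else -1.
Definition ee {R : realType} (b : bool) : R := if b then 0 else 1.


Definition tt {R : realType} {d M} (D : CD R d M) (i j : nat) (x : 'I_d.+1 -> R) : R :=
  dotp (cU D (inord i) (inord j)) (fun k => x k - cc D (inord i) k).
Definition Lf {R : realType} {d M} (D : CD R d M) i j (b : bool) x : R :=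
  if b then cs D (inord i) - tt D i j x else tt D i j x.
Definition clf {R : realType} {d M} (D : CD R d M) i j (b : bool) : bool :=
  if b then chi D (inord i) (inord j) else clo D (inord i) (inord j).
Definition kval {R : realType} {d M} (D : CD R d M) i j b x : R :=
  heaviside (sg (clf D i j b) * Lf D i j b x).
Definition phi {R : realType} {d M} (D : CD R d M) i j b x : R :=
  ee (clf D i j b) + sg (clf D i j b) * kval D i j b x.
Definition face {R : realType} {d M} (D : CD R d M) i j b x : Prop :=
  halfsp (clf D i j b) (Lf D i j b x).
Definition Sf {R : realType} {d M} (D : CD R d M) i x : R :=
  \sum_(k < pp d) phi D i (slotj d k) (slotb d k) x.
Definition gf {R : realType} {d M} (D : CD R d M) i x : R := phi D i 0%N true x.
Definition Kf {R : realType} {d M} (D : CD R d M) i : R := cs D (inord i) + 1.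
Definition Arg {R : realType} {d M} (D : CD R d M) i x : R :=
  tt D i 0%N x - Kf D i * ((pp d)%:R - Sf D i x) + Kf D i * (pp d)%:R * (1 - gf D i x).
Definition zval {R : realType} {d M} (D : CD R d M) i x : R :=
  heaviside (sg (clf D i 0%N false) * Arg D i x).

Lemma phi1 {R : realType} {d M} (D : CD R d M) i j b x : face D i j b x -> phi D i j b x = 1.
Proof.
rewrite /face /phi /kval /heaviside /halfsp /sg /ee.
case: (clf D i j b) => /= h; first by rewrite !mul1r h; ring.
rewrite ifF; first ring.
by apply/negbTE; rewrite -ltNge; lra.
Qed.

Lemma phi0 {R : realType} {d M} (D : CD R d M) i j b x : ~ face D i j b x -> phi D i j b x = 0.
Proof.
rewrite /face /phi /kval /heaviside /halfsp /sg /ee.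
case: (clf D i j b) => /= h.
  by rewrite !mul1r ifF; [ring | apply/negbTE/negP].
rewrite ifT; first ring.
by move/negP: h; rewrite -leNgt; lra.
Qed.

Lemma phi01 {R : realType} {d M} (D : CD R d M) i j b x : 0 <= phi D i j b x <= 1.
Proof.
case: (pselect (face D i j b x)) => h; [rewrite phi1 // | rewrite phi0 //]; lra.
Qed.

Lemma faces_split {R : realType} {d M} (D : CD R d M) i x :
  (forall j : 'I_d.+1, face D i j false x /\ face D i j true x) <->
  [/\ face D i 0%N false x, face D i 0%N true x &
      forall k, (k < pp d)%N -> face D i (slotj d k) (slotb d k) x].
Proof.
split.
  move=> H; split; try by case: (H ord0).
  move=> k hk.
  have hj : (slotj d k < d.+1)%N by rewrite /slotj /pp in hk *; case: ifP => hh; lia.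
  have := H (Ordinal hj); case: (slotb d k) => /= -[] //.
case=> h0 h1 H [j hjd] /=.
case: (posnP j) => hj; first by rewrite hj.
have hj' : (j.-1 < d)%N by lia.
have e1 : slotj d j.-1 = j by rewrite /slotj hj'; lia.
have e2 : slotj d (d + j.-1) = j by rewrite /slotj ifF; lia.
split.
  have := H j.-1 ltac:(rewrite /pp; lia); rewrite e1 /slotb.
  by rewrite leqNgt hj'.
have := H (d + j.-1)%N ltac:(rewrite /pp; lia); rewrite e2 /slotb.
by rewrite leq_addr.
Qed.

Lemma nat_true {R : realType} : ((true : nat)%:R : R) = 1. Proof. by []. Qed.
Lemma nat_false {R : realType} : ((false : nat)%:R : R) = 0. Proof. by []. Qed.

Lemma Sf_all {R : realType} {d M} (D : CD R d M) i x :
  (forall k, (k < pp d)%N -> face D i (slotj d k) (slotb d k) x) -> Sf D i x = (pp d)%:R.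
Proof.
move=> H; rewrite /Sf (eq_bigr (fun _ => 1)) ?sumr_const ?card_ord //.
by move=> k _; apply: phi1; apply: H.
Qed.

Lemma Sf_ge0 {R : realType} {d M} (D : CD R d M) i x : 0 <= Sf D i x.
Proof. by apply: sumr_ge0 => k _; case/andP: (phi01 D i (slotj d k) (slotb d k) x). Qed.

Lemma Sf_fail {R : realType} {d M} (D : CD R d M) i x k :
  (k < pp d)%N -> ~ face D i (slotj d k) (slotb d k) x -> 1 <= (pp d)%:R - Sf D i x.
Proof.
move=> hk hf.
have -> : (pp d)%:R - Sf D i x = \sum_(k < pp d) (1 - phi D i (slotj d k) (slotb d k) x).
  by rewrite sumrB sumr_const card_ord.
rewrite (bigD1 (Ordinal hk)) //= phi0 // subr0 lerDl.
apply: sumr_ge0 => k' _; case/andP: (phi01 D i (slotj d k') (slotb d k') x) => _ h; lra.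
Qed.

Lemma cube_ind {R : realType} {d M} (D : CD R d M) i (C : set ('I_d.+1 -> R)) x :
  0 < cs D (inord i) ->
  (C x <-> forall j : 'I_d.+1, face D i j false x /\ face D i j true x) ->
  \1_C x = sg (clf D i 0%N false) * zval D i x + gf D i x - (1 - ee (clf D i 0%N false)).
Proof.
move=> hs HC; rewrite indicE.
have hK : Kf D i = cs D (inord i) + 1 by [].
have hS0 := Sf_ge0 D i x.
rewrite /zval /Arg /gf.
case: (pselect (face D i 0%N true x)) => hG.
  rewrite (phi1 hG).
  have ht : tt D i 0%N x <= cs D (inord i).
    by move: hG; rewrite /face /halfsp /Lf; case: (clf D i 0%N true) => /= h; lra.
  case: (pselect (exists k, (k < pp d)%N /\ ~ face D i (slotj d k) (slotb d k) x)) => hP.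
    case: hP => k [hk hf].
    have hnC : ~ C x.
      by move/HC/faces_split => [_ _ /(_ k hk)].
    rewrite memNset // nat_false.
    have h1 := Sf_fail hk hf.
    have hA : tt D i 0%N x - Kf D i * ((pp d)%:R - Sf D i x) +
       Kf D i * (pp d)%:R * (1 - 1) <= -1.
      rewrite subrr mulr0 addr0 hK; nra.
    rewrite /heaviside /sg /ee; case: (clf D i 0%N false) => /=.
      by rewrite !mul1r ifF; [ring | apply/negbTE; rewrite -ltNge; lra].
    by rewrite !mulN1r ifT; [ring | lra].
  have hall : forall k, (k < pp d)%N -> face D i (slotj d k) (slotb d k) x.
    move=> k hk; case: (pselect (face D i (slotj d k) (slotb d k) x)) => // hf.
    by exfalso; apply: hP; exists k.
  rewrite (Sf_all hall) subrr mulr0 subr0 subrr mulr0 addr0.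
  have HF : C x <-> face D i 0%N false x.
    split; first by move/HC/faces_split => [].
    by move=> hF; apply/HC/faces_split.
  case: (pselect (face D i 0%N false x)) => hF.
    rewrite mem_set ?nat_true; last by apply/HF.
    move: hF; rewrite /face /halfsp /Lf /heaviside /sg /ee.
    case: (clf D i 0%N false) => /= hF.
      by rewrite !mul1r ifT //; ring.
    by rewrite !mulN1r ifF; [ring | apply/negbTE; rewrite -ltNge; lra].
  rewrite memNset ?nat_false; last by move/HF.
  move: hF; rewrite /face /halfsp /Lf /heaviside /sg /ee.
  case: (clf D i 0%N false) => /= hF.
    by rewrite !mul1r ifF; [ring | apply/negbTE/negP].
  by rewrite !mulN1r ifT; [ring | move/negP: hF; rewrite -leNgt; lra].
rewrite (phi0 hG).
have hnC : ~ C x by move/HC/faces_split => [].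
rewrite memNset // nat_false.
have ht : cs D (inord i) <= tt D i 0%N x.
  by move: hG; rewrite /face /halfsp /Lf; case: (clf D i 0%N true) => /= h;
     [move/negP: h; rewrite -ltNge | move/negP: h; rewrite -leNgt]; lra.
have hA : 0 < tt D i 0%N x - Kf D i * ((pp d)%:R - Sf D i x) + Kf D i * (pp d)%:R * (1 - 0).
  rewrite subr0 mulr1 hK; nra.
rewrite /heaviside /sg /ee; case: (clf D i 0%N false) => /=.
  by rewrite !mul1r ifT; [ring | lra].
by rewrite !mulN1r ifF; [ring | apply/negbTE; rewrite -ltNge; lra].
Qed.

Local Close Scope ring_scope.
Local Close Scope classical_set_scope.

Definition L1 (d M : nat) := (d.+1 + M.+1)%N.
Definition AA (d M : nat) := (L1 d M + M.+1 * pp d)%N.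
Definition NN (d M : nat) := (AA d M + M.+1)%N.

Definition Erel (d M : nat) (u v : nat) : bool :=
  if (v < d.+1)%N then false
  else if (v < AA d M)%N then (u < d.+1)%N
  else if (v < NN d M)%N then
    [|| (u < d.+1)%N,
        (if v == AA d M then (d.+1 <= u) && (u < d.+1 + M.+1)
         else u == (d.+1 + (v - AA d M))%N)
      | (L1 d M + (v - AA d M) * pp d <= u) && (u < L1 d M + (v - AA d M) * pp d + pp d)]
  else ((d.+1 <= u) && (u < d.+1 + M.+1)) || ((AA d M <= u) && (u < NN d M)).

Lemma count_lt b N : (b <= N)%N -> (\sum_(0 <= u < N) ((u < b) : nat) = b)%N.
Proof.
move=> hb; rewrite -{2}[b]subn0 -(count_range (leq0n b) hb).
by apply: eq_bigr => u _.
Qed.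

Lemma count_eq k N : (k < N)%N -> (\sum_(0 <= u < N) ((u == k) : nat) = 1)%N.
Proof.
move=> hk; have -> : 1%N = (k.+1 - k)%N by rewrite subSnn.
rewrite -(count_range (leqnSn k) hk).
apply: eq_bigr => u _; congr nat_of_bool; lia.
Qed.

Lemma indeg d M v : (v <= NN d M)%N ->
  (\sum_(0 <= u < (NN d M).+1) (Erel d M u v : nat) =
  if (v < d.+1)%N then 0 else if (v < AA d M)%N then d.+1
  else if (v < NN d M)%N then d.+1 + (if v == AA d M then M.+1 else 1) + pp d
  else M.+1 + M.+1)%N.
Proof.
have hA : (d.+1 + M.+1 <= AA d M)%N by rewrite /AA /L1; lia.
have hN : (AA d M < NN d M)%N by rewrite /NN; lia.
move=> hv; rewrite /Erel; case: ifP => h1.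
  by rewrite sum_nat_eq0.
case: ifP => h2.
  by rewrite count_lt //; lia.
case: ifP => h3.
  have hi : (v - AA d M < M.+1)%N by rewrite /NN in h3; lia.
  have hpi : ((v - AA d M).+1 * pp d <= M.+1 * pp d)%N by rewrite leq_mul2r hi orbT.
  have hB : (L1 d M + (v - AA d M) * pp d + pp d <= AA d M)%N.
    move: hpi; rewrite /AA mulSn; lia.
  set i := (v - AA d M) in hi hpi hB *; set q := (i * pp d)%N in hB *.
  case: eqP => hvA.
  - rewrite (eq_bigr (fun u => (u < d.+1) + (((d.+1 <= u) && (u < d.+1 + M.+1)) +
       ((L1 d M + (v - AA d M) * pp d <= u) && (u < L1 d M + (v - AA d M) * pp d + pp d))))%N); last first.
      move: hB; rewrite /L1 => hB u _; rewrite orb_nat ?orb_nat //.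
      all: try (apply/negP; lia).
    rewrite !big_split /= count_lt; last by lia.
    rewrite !count_range; try lia.
  - rewrite (eq_bigr (fun u => (u < d.+1) + ((u == (d.+1 + (v - AA d M))%N) +
       ((L1 d M + (v - AA d M) * pp d <= u) && (u < L1 d M + (v - AA d M) * pp d + pp d))))%N); last first.
      move: hB; rewrite /L1 => hB u _; rewrite orb_nat ?orb_nat //.
      all: try (apply/negP; lia).
    rewrite !big_split /= count_lt; last by lia.
    rewrite count_eq; last by lia.
    rewrite !count_range; lia.
rewrite (eq_bigr (fun u => (((d.+1 <= u) && (u < d.+1 + M.+1)) + ((AA d M <= u) && (u < NN d M))))%N); last first.
  by move=> u _; rewrite orb_nat //; apply/negP; lia.
rewrite big_split /= !count_range; rewrite /NN; lia.
Qed.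

Lemma total_edges d M :
  (\sum_(0 <= v < (NN d M).+1) \sum_(0 <= u < (NN d M).+1) (Erel d M u v : nat)
   + ((NN d M).+1 - d.+1) = 2 * d.+2 ^ 2 * M.+1)%N.
Proof.
have hA : (d.+1 + M.+1 <= AA d M)%N by rewrite /AA /L1; lia.
have hN : (NN d M = (AA d M + M).+1)%N by rewrite /NN addnS.
rewrite (eq_big_nat _ _ (F2 := fun v => if (v < d.+1)%N then 0 else if (v < AA d M)%N then d.+1
  else if (v < NN d M)%N then d.+1 + (if v == AA d M then M.+1 else 1) + pp d
  else M.+1 + M.+1)%N); last by move=> v /andP[_ hv]; apply: indeg.
rewrite hN.
rewrite (@big_cat_nat _ _ _ d.+1) //=; last by lia.
rewrite (@big_cat_nat _ _ _ (AA d M) d.+1) //=; last by lia.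
rewrite (@big_cat_nat _ _ _ (AA d M + M).+1 (AA d M)) //=; last by lia.
rewrite sum_nat_eq0; last by move=> u /andP[_ ->].
rewrite (eq_big_nat _ _ (F2 := fun _ => d.+1)); last first.
  by move=> u /andP[h1 h2]; rewrite ltnNge h1 /= h2.
rewrite big_nat1 ltnn !ifF; first last.
- by apply/negbTE; rewrite -leqNgt; lia.
- by apply/negbTE; rewrite -leqNgt; lia.
rewrite big_nat_recl; last by lia.
have f1 : (AA d M < d.+1)%N = false by apply/negbTE; rewrite -leqNgt; lia.
rewrite f1 ltnn ltnS leq_addr eqxx /=.
rewrite (@eq_big_nat _ _ _ (AA d M) (AA d M + M) _ (fun _ => d.+1 + 1 + pp d)%N); last first.
  move=> u /andP[h1 h2] /=.
  have -> : (u.+1 < d.+1)%N = false by lia.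
  have -> : (u.+1 < AA d M)%N = false by lia.
  have -> : (u.+1 < (AA d M + M).+1)%N = true by lia.
  have -> : (u.+1 == AA d M)%N = false by lia.
  by [].
rewrite !sum_nat_const_nat.
rewrite /AA /L1 /pp; lia.
by lia.
Qed.
Local Open Scope ring_scope.
Local Open Scope classical_set_scope.

Definition Uc {R : realType} {d M} (D : CD R d M) i j u : R := cU D (inord i) (inord j) (inord u).
Definition dUc {R : realType} {d M} (D : CD R d M) i j : R :=
  dotp (cU D (inord i) (inord j)) (cc D (inord i)).
Definition w1 {R : realType} {d M} (D : CD R d M) i j (b : bool) u : R :=
  sg (clf D i j b) * (if b then - Uc D i j u else Uc D i j u).
Definition b1 {R : realType} {d M} (D : CD R d M) i j (b : bool) : R :=
  sg (clf D i j b) * (if b then cs D (inord i) + dUc D i j else - dUc D i j).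

Lemma dotpB {R : realType} {d : nat} (a x c : 'I_d -> R) :
  dotp a (fun k => x k - c k) = dotp a x - dotp a c.
Proof. by rewrite /dotp -sumrB; apply: eq_bigr => k _; ring. Qed.

Lemma pre1 {R : realType} {d M} (D : CD R d M) i j b (x : 'I_d.+1 -> R) :
  \sum_(0 <= u < d.+1) w1 D i j b u * x (inord u) + b1 D i j b = sg (clf D i j b) * Lf D i j b x.
Proof.
rewrite big_mkord.
have -> : \sum_(k < d.+1) w1 D i j b k * x (inord k) =
    sg (clf D i j b) * ((if b then -1 else 1) * dotp (cU D (inord i) (inord j)) x).
  rewrite /dotp mulr_sumr mulr_sumr; apply: eq_bigr => k _.
  rewrite /w1 /Uc !inord_val; case: b; ring.
rewrite /b1 /Lf /tt dotpB -/(dUc D i j); case: b; ring.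
Qed.

Definition node1 (d M v : nat) : nat * nat * bool :=
  if (v < d.+1 + M.+1)%N then (v - d.+1, 0, true)%N
  else let r := (v - L1 d M)%N in (r %/ pp d, slotj d (r %% pp d), slotb d (r %% pp d))%N.

Definition sg0 {R : realType} {d M} (D : CD R d M) i : R := sg (clf D i 0%N false).

Definition outv {R : realType} {d M} (D : CD R d M) x : R :=
  \sum_(i < M.+1) calpha D (inord i) *
    (sg0 D i * zval D i x + gf D i x - (1 - ee (clf D i 0%N false))).

Definition Yv {R : realType} {d M} (D : CD R d M) (x : 'I_d.+1 -> R) (v : nat) : R :=
  if (v < d.+1)%N then x (inord v)
  else if (v < AA d M)%N then kval D (node1 d M v).1.1 (node1 d M v).1.2 (node1 d M v).2 x
  else if (v < NN d M)%N then zval D (v - AA d M) x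
  else outv D x.

Definition W {R : realType} {d M} (D : CD R d M) (u v : nat) : R :=
  if (v < d.+1)%N then 0
  else if (v < AA d M)%N then
    (if (u < d.+1)%N then w1 D (node1 d M v).1.1 (node1 d M v).1.2 (node1 d M v).2 u else 0)
  else if (v < NN d M)%N then
    (if (u < d.+1)%N then sg0 D (v - AA d M) * Uc D (v - AA d M) 0 u
     else if u == (d.+1 + (v - AA d M))%N then
       - (sg0 D (v - AA d M) * Kf D (v - AA d M) * (pp d)%:R * sg (clf D (v - AA d M) 0%N true))
     else if (L1 d M + (v - AA d M) * pp d <= u)%N && (u < L1 d M + (v - AA d M) * pp d + pp d)%N then
       sg0 D (v - AA d M) * Kf D (v - AA d M) *
         sg (clf D (v - AA d M) (slotj d (u - (L1 d M + (v - AA d M) * pp d)))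
                                 (slotb d (u - (L1 d M + (v - AA d M) * pp d))))
     else 0)
  else if (d.+1 <= u)%N && (u < d.+1 + M.+1)%N then
    calpha D (inord (u - d.+1)) * sg (clf D (u - d.+1) 0%N true)
  else if (AA d M <= u)%N && (u < NN d M)%N then
    calpha D (inord (u - AA d M)) * sg0 D (u - AA d M)
  else 0.

Definition Bv {R : realType} {d M} (D : CD R d M) (v : nat) : R :=
  if (v < d.+1)%N then 0
  else if (v < AA d M)%N then b1 D (node1 d M v).1.1 (node1 d M v).1.2 (node1 d M v).2
  else if (v < NN d M)%N then
    sg0 D (v - AA d M) * (- dUc D (v - AA d M) 0 - Kf D (v - AA d M) * (pp d)%:R
      + Kf D (v - AA d M) * \sum_(k < pp d) ee (clf D (v - AA d M) (slotj d k) (slotb d k))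
      + Kf D (v - AA d M) * (pp d)%:R * (1 - ee (clf D (v - AA d M) 0%N true)))
  else \sum_(i < M.+1) calpha D (inord i) * (ee (clf D i 0%N true) - (1 - ee (clf D i 0%N false))).

Lemma W_support {R : realType} {d M} (D : CD R d M) u v :
  (v <= NN d M)%N -> ~~ Erel d M u v -> W D u v = 0.
Proof.
move=> hv; rewrite /Erel /W.
case: ifP => // h1; case: ifP => h2; first by move/negbTE => ->.
case: ifP => h3.
  rewrite !negb_or => /and3P[/negbTE -> hb /negbTE ->].
  case: eqP hb => [hvA hb | _ /negbTE -> //].
  case: eqP => // hu; exfalso; move: hb; rewrite hu hvA subnn addn0; lia.
by rewrite negb_or => /andP[/negbTE -> /negbTE ->].
Qed.

Lemma sum_restrict {R : realType} (F : nat -> R) a b N : (a <= b)%N -> (b <= N)%N ->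
  (forall u, (u < N)%N -> ~~ ((a <= u) && (u < b))%N -> F u = 0) ->
  \sum_(0 <= u < N) F u = \sum_(a <= u < b) F u.
Proof.
move=> hab hbN H.
rewrite (@big_cat_nat _ _ _ a) //=; last by lia.
rewrite (@big_cat_nat _ _ _ b a N) //=.
rewrite sum_nat_eq0 ?add0r; last by move=> u hu; apply: H; lia.
rewrite [X in _ + X]sum_nat_eq0 ?addr0 //; move=> u hu; apply: H; lia.
Qed.

Lemma sum_shift {R : realType} (F : nat -> R) a p :
  \sum_(a <= u < a + p) F u = \sum_(k < p) F (a + k)%N.
Proof.
rewrite -{1}[a]add0n big_addn addKn big_mkord; apply: eq_bigr => k _; by rewrite addnC.
Qed.

Lemma sum_single {R : realType} (c : R) k N : (k < N)%N ->
  \sum_(0 <= u < N) (if u == k then c else 0) = c.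
Proof.
move=> hk; rewrite (@sum_restrict _ _ k k.+1) //; last first.
  by move=> u _ hu; rewrite ifF //; apply/negbTE; apply: contra hu => /eqP ->; rewrite leqnn ltnSn.
by rewrite big_nat1 eqxx.
Qed.

Lemma sumY {R : realType} {d M} (D : CD R d M) (v : nat) (x : 'I_d.+1 -> R)
  (Hv : (v <= NN d M)%N) :
  \sum_(u : 'I_(NN d M).+1 | Erel d M u v) W D u v * Yv D x u =
  \sum_(0 <= u < (NN d M).+1) W D u v * Yv D x u.
Proof.
rewrite -(big_mkord (fun u => Erel d M u v) (fun u => W D u v * Yv D x u)) big_mkcond /=.
apply: eq_bigr => u _.
by case: ifP => // /negbT h; rewrite W_support // mul0r.
Qed.

Lemma layer1 {R : realType} {d M} (D : CD R d M) (v : nat) (x : 'I_d.+1 -> R) :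
  (d.+1 <= v)%N -> (v < AA d M)%N ->
  \sum_(0 <= u < (NN d M).+1) W D u v * Yv D x u + Bv D v =
  sg (clf D (node1 d M v).1.1 (node1 d M v).1.2 (node1 d M v).2) *
    Lf D (node1 d M v).1.1 (node1 d M v).1.2 (node1 d M v).2 x.
Proof.
move=> h1 h2.
have hA : (AA d M <= NN d M)%N by rewrite /NN; lia.
rewrite (@sum_restrict _ _ 0 d.+1) //; last 2 first.
- lia.
- by move=> u _ hu; rewrite /W ltnNge h1 h2 /= ifF ?mul0r //; apply/negbTE; move: hu; lia.
rewrite -pre1; congr (_ + _); last by rewrite /Bv ltnNge h1 h2.
apply: eq_big_nat => u /andP[_ hu].
by rewrite /W /Yv ltnNge h1 h2 hu.
Qed.

Lemma node1_g d M i : (i < M.+1)%N -> node1 d M (d.+1 + i) = (i, 0%N, true).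
Proof. by move=> hi; rewrite /node1 ifT ?addKn //; lia. Qed.

Lemma node1_block d M i k : (k < pp d)%N ->
  node1 d M (L1 d M + i * pp d + k) = (i, slotj d k, slotb d k).
Proof.
move=> hk; rewrite /node1 ifF; last by rewrite /L1; lia.
have hp : (0 < pp d)%N by lia.
rewrite -addnA addKn divnMDl // divn_small // addn0.
by rewrite modnMDl modn_small.
Qed.

Lemma layer2 {R : realType} {d M} (D : CD R d M) (v : nat) (x : 'I_d.+1 -> R) :
  (AA d M <= v)%N -> (v < NN d M)%N ->
  \sum_(0 <= u < (NN d M).+1) W D u v * Yv D x u + Bv D v =
  sg0 D (v - AA d M) * Arg D (v - AA d M) x.
Proof.
move=> h1 h2.
have hv1 : (v < d.+1)%N = false by rewrite /AA /L1 in h1; lia.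
have hv2 : (v < AA d M)%N = false by lia.
set i := (v - AA d M)%N.
have hi : (i < M.+1)%N by rewrite /i; rewrite /NN in h2; lia.
set base := (L1 d M + i * pp d)%N.
have hpi : (i.+1 * pp d <= M.+1 * pp d)%N by rewrite leq_mul2r hi orbT.
have hB : (base + pp d <= AA d M)%N by move: hpi; rewrite /base /AA mulSn; lia.
have hb0 : (d.+1 + M.+1 <= base)%N by rewrite /base /L1; lia.
have hAN : (AA d M < NN d M)%N by rewrite /NN; lia.
set c2 := - (sg0 D i * Kf D i * (pp d)%:R * sg (clf D i 0%N true)).
have hG : forall u, W D u v * Yv D x u =
  (if (u < d.+1)%N then sg0 D i * Uc D i 0 u * x (inord u) else 0) +
  ((if u == (d.+1 + i)%N then c2 * kval D i 0%N true x else 0) +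
   (if (base <= u)%N && (u < base + pp d)%N then
      sg0 D i * Kf D i * sg (clf D i (slotj d (u - base)) (slotb d (u - base))) *
      kval D i (slotj d (u - base)) (slotb d (u - base)) x else 0)).
  move=> u; rewrite /W hv1 hv2 h2 -/i -/base.
  case: (ltnP u d.+1) => hu1.
    have -> : (u == (d.+1 + i)%N) = false by lia.
    have -> : ((base <= u)%N && (u < base + pp d)%N) = false by lia.
    by rewrite /Yv hu1 addr0 addr0.
  case: eqP => hu2.
    have -> : ((base <= u)%N && (u < base + pp d)%N) = false by lia.
    by rewrite /Yv ltnNge hu1 /= hu2 ifT ?node1_g //= ?addr0 ?add0r //; lia.
  case: ifP => hu3; last by rewrite !addr0 mul0r.
  have hk : (u - base < pp d)%N by lia.
  have eu : u = (L1 d M + i * pp d + (u - base))%N by rewrite /base in hu3 *; lia.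
  rewrite /Yv ltnNge hu1 /= ifT; last by lia.
  by rewrite {3 4 5}eu node1_block //= !add0r.
rewrite (eq_big_nat _ _ (fun u _ => hG u)) /= !big_split /=.
rewrite (@sum_restrict _ _ 0 d.+1) //; last 2 first.
- by rewrite /NN; lia.
- by move=> u _ hu; rewrite ifF //; lia.
rewrite sum_single; last by rewrite /NN; lia.
rewrite (@sum_restrict _ _ base (base + pp d) (NN d M).+1) //; last 3 first.
- by lia.
- by rewrite /NN; lia.
- by move=> u _ hu; rewrite ifF //; apply/negbTE.
rewrite sum_shift.
rewrite (eq_bigr (fun k : 'I_(pp d) => sg0 D i * Kf D i *
   (sg (clf D i (slotj d k) (slotb d k)) * kval D i (slotj d k) (slotb d k) x))); last first.
  move=> k _; rewrite ifT; last by have := ltn_ord k; lia.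
  by rewrite addKn mulrA.
rewrite -mulr_sumr.
rewrite (eq_big_nat _ _ (F2 := fun u => sg0 D i * (Uc D i 0 u * x (inord u)))); last first.
  by move=> u /andP[_ ->]; rewrite mulrA.
rewrite -mulr_sumr big_mkord.
rewrite /Bv hv1 hv2 h2 -/i /Arg /gf /Sf /phi /tt dotpB -/(dUc D i 0%N).
rewrite big_split /= -/c2.
have -> : \sum_(k < d.+1) Uc D i 0 k * x (inord k) = dotp (cU D (inord i) (inord 0%N)) x.
  by rewrite /dotp; apply: eq_bigr => k _; rewrite /Uc !inord_val.
rewrite /c2; ring.
Qed.

Lemma layer3 {R : realType} {d M} (D : CD R d M) (x : 'I_d.+1 -> R) :
  \sum_(0 <= u < (NN d M).+1) W D u (NN d M) * Yv D x u + Bv D (NN d M) = outv D x.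
Proof.
have hv1 : (NN d M < d.+1)%N = false by rewrite /NN /AA /L1; lia.
have hv2 : (NN d M < AA d M)%N = false by rewrite /NN; lia.
have hv3 : (NN d M < NN d M)%N = false by rewrite ltnn.
have hA : (d.+1 + M.+1 <= AA d M)%N by rewrite /AA /L1; lia.
have hG : forall u, W D u (NN d M) * Yv D x u =
  (if (d.+1 <= u)%N && (u < d.+1 + M.+1)%N then
     calpha D (inord (u - d.+1)) * sg (clf D (u - d.+1) 0%N true) * kval D (u - d.+1) 0%N true x
   else 0) +
  (if (AA d M <= u)%N && (u < NN d M)%N then
     calpha D (inord (u - AA d M)) * sg0 D (u - AA d M) * zval D (u - AA d M) x else 0).
  move=> u; rewrite /W hv1 hv2 hv3.
  case: ifP => hu1.
    have -> : ((AA d M <= u)%N && (u < NN d M)%N) = false by lia.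
    rewrite /Yv ifF; last by lia.
    rewrite ifT; last by lia.
    by rewrite /node1 ifT /= ?addr0 //; lia.
  case: ifP => hu2; last by rewrite mul0r addr0.
  rewrite /Yv ifF; last by lia.
  by rewrite ifF ?ifT ?add0r //; lia.
rewrite (eq_big_nat _ _ (fun u _ => hG u)) /= big_split /=.
rewrite (@sum_restrict _ _ d.+1 (d.+1 + M.+1) (NN d M).+1); first last.
- by move=> u _ hu; rewrite ifF //; apply/negbTE.
- by rewrite /NN; lia.
- by lia.
rewrite (@sum_restrict _ _ (AA d M) (NN d M) (NN d M).+1); first last.
- by move=> u _ hu; rewrite ifF //; apply/negbTE.
- by rewrite /NN; lia.
- by rewrite /NN; lia.
rewrite sum_shift /NN sum_shift -/(NN d M).
rewrite /Bv hv1 hv2 hv3 /outv -!big_split /=; apply: eq_bigr => k _.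
rewrite ifT; last by have := ltn_ord k; lia.
rewrite ifT; last by have := ltn_ord k; rewrite /NN; lia.
rewrite !addKn /gf /phi; ring.
Qed.

Local Close Scope ring_scope.
Local Close Scope classical_set_scope.

Lemma Erel_lt d M u v : (v <= NN d M)%N -> Erel d M u v -> (u < v)%N.
Proof.
move=> hv; rewrite /Erel.
case: ifP => // h1; case: ifP => h2; first by move=> hu; lia.
case: ifP => h3.
  have hi : (v - AA d M < M.+1)%N by rewrite /NN in h3; lia.
  have hpi : ((v - AA d M).+1 * pp d <= M.+1 * pp d)%N by rewrite leq_mul2r hi orbT.
  move: hpi; set i := (v - AA d M)%N => hpi.
  have hB : (L1 d M + i * pp d + pp d <= AA d M)%N by move: hpi; rewrite /AA mulSn; lia.
  have hA : (d.+1 + M.+1 <= AA d M)%N by rewrite /AA /L1; lia.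
  case/or3P => [hu|hu|/andP[_ hu]]; try lia.
  by move: hu; case: ifP => _ ; lia.
by case/orP => /andP[_ hu]; move: hu; rewrite /NN /AA /L1 in h3 hv *; lia.
Qed.

Lemma Erel_out d M w : (w <= NN d M)%N -> Erel d M (NN d M) w = false.
Proof.
move=> hw; rewrite /Erel.
have hA : (d.+1 + M.+1 <= AA d M)%N by rewrite /AA /L1; lia.
have hN : (NN d M = AA d M + M.+1)%N by [].
case: ifP => // h1; case: ifP => h2; first by lia.
case: ifP => h3.
  have hi : (w - AA d M < M.+1)%N by lia.
  have hpi : ((w - AA d M).+1 * pp d <= M.+1 * pp d)%N by rewrite leq_mul2r hi orbT.
  move: hpi; set i := (w - AA d M)%N => hpi.
  have hB : (L1 d M + i * pp d + pp d <= AA d M)%N by move: hpi; rewrite /AA mulSn; lia.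
  apply/negbTE; rewrite !negb_or; apply/and3P; split; try lia.
  by case: ifP => _; lia.
lia.
Qed.

Definition lay d M (v : nat) : nat :=
  if (v < d.+1)%N then 0 else if (v < AA d M)%N then 1 else if (v < NN d M)%N then 2 else 3.

Lemma arch d M : is_arch d.+1 (fun u v : 'I_(NN d M).+1 => Erel d M u v).
Proof.
have hA : (d.+1 + M.+1 <= AA d M)%N by rewrite /AA /L1; lia.
have hN : (NN d M = AA d M + M.+1)%N by [].
split.
- by rewrite hN; lia.
- by move=> u v; apply: Erel_lt; rewrite -ltnS.
- move=> v; split; first by move=> hv u; rewrite /Erel hv.
  move=> H; case: (ltnP v d.+1) => // hv; exfalso.
  case: (ltnP v (NN d M)) => hvN.
    have := H ord0; rewrite /Erel ltnNge hv /=.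
    by case: ifP => //; rewrite hvN.
  have hd : (d.+1 < (NN d M).+1)%N by lia.
  have := H (Ordinal hd); rewrite /Erel ltnNge hv /= ifF; last by have := ltn_ord v; lia.
  by rewrite ifF; [rewrite leqnn /=; lia | have := ltn_ord v; lia].
- move=> [v hv0]; split.
    by move=> /(congr1 val) /= -> w; rewrite Erel_out //; rewrite -ltnS.
  move=> H; apply: val_inj => /=.
  case: (ltnP v (NN d M)) => hvN; last by lia.
  exfalso.
  have hn : (NN d M < (NN d M).+1)%N by [].
  have hNd : (NN d M < d.+1)%N = false by lia.
  have hNA : (NN d M < AA d M)%N = false by lia.
  have hNN : (NN d M < NN d M)%N = false by rewrite ltnn.
  case: (ltnP v d.+1) => h1.
    have hd : (d.+1 < (NN d M).+1)%N by lia.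
    have : Erel d M v d.+1 by rewrite /Erel ltnn ifT //; lia.
    by move/negP: (H (Ordinal hd)).
  case: (ltnP v (d.+1 + M.+1)) => h2.
    have : Erel d M v (NN d M) by rewrite /Erel hNd hNA hNN h1 h2.
    by move/negP: (H (Ordinal hn)).
  case: (ltnP v (AA d M)) => h3.
    have hp : (0 < pp d)%N.
      by move: h3; rewrite /AA /L1; case: (pp d) => //; rewrite muln0; lia.
    set r := (v - L1 d M)%N.
    have hr1 := leq_divM r (pp d).
    have hr2 := ltn_ceil r hp.
    have hrM : (r %/ pp d < M.+1)%N by rewrite ltn_divLR // /r; move: h3; rewrite /AA /L1; lia.
    set q := (r %/ pp d) in hr1 hr2 hrM *.
    have hw : (AA d M + q < (NN d M).+1)%N by rewrite hN; lia.
    have : Erel d M v (AA d M + q).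
      rewrite /Erel.
      rewrite ifF; last by lia.
      rewrite ifF; last by lia.
      rewrite ifT; last by rewrite hN; lia.
      rewrite addKn; apply/or3P; apply: Or33.
      by move: hr1 hr2; rewrite mulSn /r /L1 in h2 *; lia.
    by move/negP: (H (Ordinal hw)).
  have : Erel d M v (NN d M) by rewrite /Erel hNd hNA hNN h3 hvN orbT.
  by move/negP: (H (Ordinal hn)).
Qed.

Lemma layering d M : two_hidden_layers d.+1 (fun u v : 'I_(NN d M).+1 => Erel d M u v).
Proof.
have hA : (d.+1 + M.+1 <= AA d M)%N by rewrite /AA /L1; lia.
have hN : (NN d M = AA d M + M.+1)%N by [].
exists (fun v => lay d M v); split; last first.
  by rewrite /lay /= ltnn !ifF //; lia.
move=> [v hv0] /=.
case: ifP => h1; first by rewrite /lay h1.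
have lay0 : forall u, (u < d.+1)%N -> lay d M u = 0%N by move=> u hu; rewrite /lay hu.
have lay1 : forall u, (u < AA d M)%N -> (lay d M u <= 1)%N.
  by move=> u hu; rewrite /lay hu; case: ifP.
have lay2 : forall u, (u < NN d M)%N -> (lay d M u <= 2)%N.
  by move=> u hu; rewrite /lay hu; case: ifP => //; case: ifP.
have hLu : forall u : 'I_(NN d M).+1, Erel d M u v -> (lay d M u < lay d M v)%N.
  move=> [u hu0] /= he; have := Erel_lt (v:=v) _ he; rewrite -ltnS => /(_ hv0) huv.
  move: he; rewrite /Erel.
  rewrite [lay d M v]/lay h1.
  case: ifP => h2; first by move/lay0 ->.
  case: ifP => h3.
    have hi : (v - AA d M < M.+1)%N by rewrite hN in h3; lia.
    have hpi : ((v - AA d M).+1 * pp d <= M.+1 * pp d)%N by rewrite leq_mul2r hi orbT.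
    move: hpi; set i := (v - AA d M)%N => hpi.
    have hB : (L1 d M + i * pp d + pp d <= AA d M)%N by move: hpi; rewrite /AA mulSn; lia.
    move=> he; rewrite ltnS; apply: lay1.
    move: he; case/or3P => [hu|hu|/andP[hu1 hu2]]; try lia.
    by move: hu; case: ifP => _; lia.
  have hvN : v = NN d M by lia.
  by move=> _; rewrite ltnS; apply: lay2; lia.
split.
- by rewrite /lay h1; case: ifP => // _; case: ifP.
- rewrite /lay h1.
  case: ifP => h2.
    by exists ord0; rewrite /Erel h1 h2 /=.
  case: ifP => h3.
    have hi : (v - AA d M < M.+1)%N by rewrite hN in h3; lia.
    have hu : (d.+1 + (v - AA d M) < (NN d M).+1)%N by rewrite hN; lia.
    exists (Ordinal hu); rewrite /Erel /= h1 h2 h3; split.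
      by case: eqP => hvA; apply/or3P; apply: Or32; rewrite ?eqxx //; lia.
    rewrite ifF; last by lia.
    by rewrite ifT //; lia.
  have hu : (AA d M < (NN d M).+1)%N by rewrite hN; lia.
  exists (Ordinal hu); rewrite /Erel /= h1 h2 h3; split.
    by apply/orP; right; rewrite leqnn /=; lia.
  rewrite ifF; last by lia.
  by rewrite ltnn ifT //; lia.
- move=> u hu; apply: hLu. exact: hu.
Qed.

Local Open Scope classical_set_scope.
Lemma card_pairs2 n (E : rel 'I_n.+1) :
  #|[set p : 'I_n.+1 * 'I_n.+1 | E p.1 p.2]| = (\sum_(v < n.+1) \sum_(u < n.+1) (E u v : nat))%N.
Proof.
rewrite exchange_big pair_big /= -sum1_card big_mkcond /=.
apply: eq_bigr => p _; case: (boolP (E p.1 p.2)) => h.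
  by rewrite mem_set.
by rewrite memNset //; apply/negP.
Qed.

Lemma nweights_eq d M :
  nweights d.+1 (fun u v : 'I_(NN d M).+1 => Erel d M u v) = (2 * d.+2 ^ 2 * M.+1)%N.
Proof.
rewrite /nweights (card_pairs2 (fun u v : 'I_(NN d M).+1 => Erel d M u v)) -total_edges; congr (_ + _)%N.
rewrite big_mkord; apply: eq_bigr => v _.
by rewrite big_mkord.
Qed.

Local Close Scope ring_scope.
Local Close Scope classical_set_scope.
Local Open Scope ring_scope.
Local Open Scope classical_set_scope.

Unset Implicit Arguments. Set Strict Implicit.
Theorem proposition10 (R : realType) (d M : nat) :
  (0 < d)%N -> (0 < M)%N ->
  exists (n : nat) (E : rel 'I_n.+1),
    [/\ is_arch d E, two_hidden_layers d E,
        nweights d E = (2 * d.+1 ^ 2 * M)%N &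
        forall (alpha : 'I_M -> R) (C : 'I_M -> set ('I_d -> R)),
          (forall i, is_hypercube (C i)) ->
          (forall i j, i != j -> C i `&` C j = set0) ->
          in_HA E (fun x => \sum_(i < M) alpha i * \1_(C i) x)].
Proof.
case: d => // d _; case: M => // M _.
exists (NN d M), (fun u v : 'I_(NN d M).+1 => Erel d M u v).
split; [exact: arch | exact: layering | exact: nweights_eq | ].
move=> alpha C HC _.
have : forall i : 'I_M.+1, exists t : ('I_d.+1 -> 'I_d.+1 -> R) * ('I_d.+1 -> R) * R *
    ('I_d.+1 -> bool) * ('I_d.+1 -> bool),
  0 < t.1.1.2 /\ (forall x, C i x <-> forall j,
     halfsp (t.1.2 j) (dotp (t.1.1.1.1 j) (fun k => x k - t.1.1.1.2 k)) /\
     halfsp (t.2 j) (t.1.1.2 - dotp (t.1.1.1.1 j) (fun k => x k - t.1.1.1.2 k))).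
  move=> i; case: (HC i) => u [c [s [lo [hi [hs _ hx]]]]].
  by exists (u, c, s, lo, hi).
case/choice => f Hf.
pose D := mkCD (fun i => (f i).1.1.1.1) (fun i => (f i).1.1.1.2) (fun i => (f i).1.1.2)
   (fun i => (f i).1.2) (fun i => (f i).2) alpha.
have HD : forall (i : 'I_M.+1), 0 < cs D (inord i) /\
   (forall x, C i x <-> forall j : 'I_d.+1, face D i j false x /\ face D i j true x).
  move=> i; case: (Hf i) => hs hx; split; first by rewrite inord_val.
  move=> x; rewrite hx /face /clf /Lf /tt !inord_val /=.
  by split => H j; have := H j; rewrite !inord_val.
exists (fun u v => W D u v), (fun v => Bv D v) => x.
exists (fun v => Yv D x v); split.
- move=> v hv; rewrite /Yv hv; congr x; apply: val_inj; by rewrite /= inordK.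
- move=> v h1 h2.
  have hv : (v <= NN d M)%N by rewrite -ltnS.
  have hvN : (v < NN d M)%N.
    by rewrite ltn_neqAle hv andbT; apply: contra h2 => /eqP h; apply/eqP/val_inj.
  rewrite (sumY D x hv).
  case: (ltnP v (AA d M)) => h3.
    by rewrite layer1 // /Yv ltnNge h1 h3 /kval.
  by rewrite layer2 // /Yv ltnNge h1 /= ltnNge h3 /= hvN /zval.
- rewrite /= (sumY D x (leqnn _)) layer3 /Yv.
  rewrite ifF; last by rewrite /NN /AA /L1; lia.
  by rewrite ifF ?ltnn // /NN; lia.
rewrite /= /Yv ifF; last by rewrite /NN /AA /L1; lia.
rewrite ifF ?ltnn; last by rewrite /NN; lia.
rewrite /outv; apply: eq_bigr => i _.
case: (HD i) => hs hx.
rewrite (cube_ind (C := C i) hs (hx x)) /= inord_val.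
by rewrite /sg0 /clf /= inord_val.
Qed.
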